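(* For $l,m,n,u,v\in\mathbb{N}$, \[ \sum_{k=-\infty}^\infty (-1)^k\binom{l+m}{l+k}\binom{m+n}{m+k}\binom{n+l}{n+k}\binom{2u}{u+k} =\frac{(2u)!}{u!}\sum_{k=0}^{\infty} \frac{(l+m+n-k)!}{k!\,(l-k)!\,(m-k)!\,(n-k)!\,(u+k)!}, \] and \[ \sum_{k=-\infty}^\infty (-1)^k\binom{m+n}{m+k}\binom{m+n}{n+k}\binom{u+v}{u+k}\binom{u+v}{v+k} =\binom{u+v}{u}\sum_{k=0}^{\infty} \frac{(m+n)!\,(u+v+k)!}{k!\,(m-k)!\,(n-k)!\,(u+k)!\,(v+k)!}. \]
   Context: Convention: $1/j!=0$ for negative integers $j$, and binomial coefficients $\binom{a}{b}$ with $b<0$ or $b>a$ are $0$. *)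

(* Defs.v *)
From mathcomp Require Import all_boot all_order all_algebra.
Set Implicit Arguments. Unset Strict Implicit. Unset Printing Implicit Defensive.
Import Order.TTheory GRing.Theory Num.Theory.
Local Open Scope ring_scope.

Definition binZ (a b : int) : rat :=
  if (0 <= b) && (b <= a) then ('C(`|a|%N, `|b|%N))%:R else 0.

Definition invfact (j : int) : rat :=
  if j < 0 then 0 else ((`|j|%N)`!)%:R^-1.

(* Sum of f k over the integer window -N <= k <= N.  Used for sums over all
   k in Z whose summand is supported in that window. *)
Definition zsum (N : nat) (f : int -> rat) : rat :=
  \sum_(i < (2 * N).+1) f (i%:Z - N%:Z).

(* Main.v *)
Require Import Defs.
From mathcomp Require Import all_boot all_order all_algebra.
From mathcomp Require Import ring lra zify.
Import Order.TTheory GRing.Theory Num.Theory.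
Local Open Scope ring_scope.

Lemma ivS (x : int) : invfact x = (x + 1)%:~R * invfact (x + 1).
Proof.
rewrite /invfact; case: x => [n|n].
- have -> : (Posz n + 1 = Posz n.+1) by rewrite -addn1 PoszD.
  rewrite !ltNge !le0z_nat /= factS natrM invfM mulrA.
  rewrite [(Posz n.+1)%:~R]/= mulfV ?mul1r //. by rewrite pnatr_eq0.
- rewrite NegzE.
  case: n => [|n].
  + by rewrite /= mul0r.
  + have -> : (- Posz n.+2 + 1 = - Posz n.+1)%R.
      by rewrite -[n.+2]addn1 PoszD opprD addrNK.
    by rewrite /= mulr0.
Qed.

Lemma iv0 (x y : int) : x = y -> invfact x = invfact y.
Proof. by move->. Qed.
Lemma iv1 (x y : int) : y = x + 1 -> invfact x = y%:~R * invfact y.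
Proof. by move->; apply: ivS. Qed.
Lemma iv2 (x y : int) : y = x + 2 -> invfact x = (y - 1)%:~R * y%:~R * invfact y.
Proof.
move=> ->; rewrite (ivS x) (ivS (x + 1)) mulrA.
have -> : x + 1 + 1 = x + 2 by rewrite -addrA.
have -> : x + 2 - 1 = x + 1 by rewrite -addrA; congr (_ + _).
by [].
Qed.
Lemma sgS (k : int) : (-1 : rat) ^ (k + 1) = - (-1) ^ k.
Proof. by rewrite expfzDr ?expr1z ?mulrN1 // oppr_eq0 oner_eq0. Qed.

Ltac s0 a b := rewrite (@iv0 a b ltac:(lia)).
Ltac s1 a b := rewrite (@iv1 a b ltac:(lia)).
Ltac s2 a b := rewrite (@iv2 a b ltac:(lia)).
Ltac fin := rewrite ?sgS ?(intrD, intrN, intrB, intrM, mulr1z);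
  try (move: ((-1:rat) ^ _) => sg); by field.

Lemma iv_neg (x : int) : x < 0 -> invfact x = 0.
Proof. by rewrite /invfact => ->. Qed.

Lemma iv_nat (n : nat) : invfact n = (n`!)%:R^-1.
Proof. by rewrite /invfact ltNge le0z_nat. Qed.

Lemma fact_iv (n : nat) : (n`!)%:R * invfact n = 1.
Proof. by rewrite iv_nat mulfV // pnatr_eq0 -lt0n fact_gt0. Qed.

Lemma binZ_iv (a : nat) (b c : int) : c = a%:Z - b ->
  binZ a b = (a`!)%:R * invfact b * invfact c.
Proof.
move=> ->; rewrite /binZ.
case: (boolP (0 <= b)) => hb /=; last first.
  by rewrite iv_neg ?mulr0 ?mul0r // ltNge.
case: (boolP (b <= a%:Z)) => hba; last first.
  by rewrite (iv_neg (a%:Z - b)) ?mulr0 //; lia.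
case: b hb hba => [b|b] //= _ hba.
have hba' : (b <= a)%N by lia.
have -> : a%:Z - b%:Z = (a - b)%N by lia.
rewrite !iv_nat -(bin_fact hba') !natrM.
set x := 'C(a, b)%:R; set y := (b`!)%:R; set z := ((a - b)`!)%:R.
have hy : y != 0 by rewrite pnatr_eq0 -lt0n fact_gt0.
have hz : z != 0 by rewrite pnatr_eq0 -lt0n fact_gt0.
by rewrite [y * z]mulrC mulrA mulfK // mulfK.
Qed.

Lemma sum_single (J K : nat) (f : nat -> rat) :
  (forall j, j != K -> f j = 0) -> ((J <= K)%N -> f K = 0) ->
  \sum_(j < J) f j = f K.
Proof.
move=> h0 h1; case: (ltnP K J) => hK.
  rewrite (bigD1 (Ordinal hK)) //= big1 ?addr0 // => i hi; apply: h0.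
  by apply: contra hi => /eqP e; apply/eqP/val_inj.
rewrite big1 ?h1 // => i _; apply: h0; have := ltn_ord i; lia.
Qed.

Lemma zsumE (N : nat) (f : int -> rat) :
  zsum N f = \sum_(0 <= i < (2 * N).+1) f (i%:Z - N%:Z).
Proof. by rewrite /zsum big_mkord. Qed.

Lemma zsum_tele (N : nat) (G : int -> rat) :
  zsum N (fun k => G (k + 1) - G k) = G (N%:Z + 1) - G (- N%:Z).
Proof.
rewrite zsumE.
rewrite (eq_bigr (fun i => G ((i.+1)%:Z - N%:Z) - G (i%:Z - N%:Z))); last first.
  by move=> i _; congr (G _ - _); lia.
rewrite (telescope_sumr (fun i => G (i%:Z - N%:Z))) //.
by congr (G _ - G _); lia.
Qed.

Lemma zsum_lin (N : nat) (a : rat) (f g : int -> rat) :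
  zsum N (fun k => a * f k - g k) = a * zsum N f - zsum N g.
Proof. by rewrite /zsum mulr_sumr -sumrB. Qed.

Lemma zsum_single (N : nat) (f : int -> rat) :
  (forall k, k != 0 -> f k = 0) -> zsum N f = f 0.
Proof.
move=> h; rewrite /zsum (@sum_single _ N (fun i : nat => f (i%:Z - N%:Z))).
- by rewrite subrr.
- move=> j hj; apply: h; apply/eqP; lia.
- lia.
Qed.

Lemma nsum_tele (J : nat) (g : nat -> rat) :
  \sum_(j < J) (g j.+1 - g j) = g J - g 0%N.
Proof. by rewrite -(big_mkord xpredT (fun j => g j.+1 - g j)) telescope_sumr. Qed.

Lemma rec_ind (S T c d : nat -> rat) (K : nat) :
  (forall n, (n < K)%N -> S n = T n) -> S K = T K ->
  (forall n, c n * S n.+1 = d n * S n) -> (forall n, c n * T n.+1 = d n * T n) ->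
  (forall n, (K <= n)%N -> c n != 0) ->
  forall n, S n = T n.
Proof.
move=> hlt hK hS hT hc n; case: (ltnP n K) => hn; first exact: hlt.
rewrite -(subnKC hn); elim: (n - K)%N => [|t IH]; first by rewrite addn0.
rewrite addnS; have hc' := hc (K + t)%N (leq_addr t K).
apply: (mulfI hc'); by rewrite hS hT IH.
Qed.
Definition FK1 (u j k : int) : rat :=
  (-1) ^ k * invfact (u + k) * invfact (u - k) * invfact (j + k) * invfact (j - k).
Definition GK1 (u j k : int) : rat :=
  - 2^-1 * (-1) ^ k * invfact (u + k - 1) * invfact (u - k) * invfact (j + k) * invfact (j + 1 - k).

Lemma K1step (u j k : int) :
  (j + 1)%:~R * (u + j + 1)%:~R * FK1 u (j + 1) k - FK1 u j k = GK1 u j (k + 1) - GK1 u j k.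
Proof.
rewrite /FK1 /GK1.
s1 (u + k) (u + k + 1). s1 (u - k) (u - k + 1). s0 (j + 1 + k) (j + k + 1).
s1 (j + k) (j + k + 1). s1 (j - k) (j + 1 - k).
s1 (u + (k + 1) - 1) (u + k + 1). s2 (u - (k + 1)) (u - k + 1).
s0 (j + (k + 1)) (j + k + 1). s1 (j + 1 - (k + 1)) (j + 1 - k).
s2 (u + k - 1) (u + k + 1).
rewrite ?sgS; rewrite ?(intrD, intrN, intrB, intrM, mulr1z).
move: ((-1:rat) ^ k) => sg.
move: (invfact (u + k + 1)) (invfact (u - k + 1)) (invfact (j + k + 1)) (invfact (j + 1 - k)) => a b c d.
move: (u%:~R : rat) (j%:~R : rat) (k%:~R : rat) => U J K.
idtac.
by field.
Qed.

Definition FK2 (u v j k : int) : rat :=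
  (-1) ^ k * invfact (u + k) * invfact (u - k) * invfact (v + k) * invfact (v - k)
  * invfact (j + k) * invfact (j - k).
Definition GK2 (u v j k : int) : rat :=
  - 2^-1 * (-1) ^ k * invfact (u + k - 1) * invfact (u - k) * invfact (v + k - 1) * invfact (v - k)
  * invfact (j + k) * invfact (j + 1 - k).

Lemma K2step (u v j k : int) :
  (j + 1)%:~R * (u + j + 1)%:~R * (v + j + 1)%:~R * FK2 u v (j + 1) k
  - (u + v + j + 1)%:~R * FK2 u v j k = GK2 u v j (k + 1) - GK2 u v j k.
Proof.
rewrite /FK2 /GK2.
s1 (u + k) (u + k + 1). s1 (u - k) (u - k + 1).
s1 (v + k) (v + k + 1). s1 (v - k) (v - k + 1). s0 (j + 1 + k) (j + k + 1).
s1 (j + k) (j + k + 1). s1 (j - k) (j + 1 - k).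
s1 (u + (k + 1) - 1) (u + k + 1). s2 (u - (k + 1)) (u - k + 1).
s1 (v + (k + 1) - 1) (v + k + 1). s2 (v - (k + 1)) (v - k + 1).
s0 (j + (k + 1)) (j + k + 1). s1 (j + 1 - (k + 1)) (j + 1 - k).
s2 (u + k - 1) (u + k + 1). s2 (v + k - 1) (v + k + 1).
fin.
Qed.

Definition FA1 (l m n k j : int) (f : rat) : rat :=
  f * invfact (l - j) * invfact (m - j) * invfact (n - j) * invfact (j + k) * invfact (j - k).
Definition GA1 (l m n k j : int) (f : rat) : rat :=
  - (f * invfact (l - j) * invfact (m - j) * invfact (n + 1 - j) * invfact (j - 1 + k) * invfact (j - 1 - k)).

Lemma A1step (l m n k j : int) (f0 f1 : rat) : f1 = (l + m + n + 1 - j)%:~R * f0 ->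
  (n + 1 - k)%:~R * (n + 1 + k)%:~R * FA1 l m (n + 1) k j f1
  - (m + n + 1)%:~R * (n + l + 1)%:~R * FA1 l m n k j f0
  = GA1 l m n k (j + 1) f0 - GA1 l m n k j f1.
Proof.
move=> ->; rewrite /FA1 /GA1.
s1 (n - j) (n + 1 - j).
s1 (l - (j + 1)) (l - j). s1 (m - (j + 1)) (m - j). s1 (n + 1 - (j + 1)) (n + 1 - j).
s0 (j + 1 - 1 + k) (j + k). s0 (j + 1 - 1 - k) (j - k).
s1 (j - 1 + k) (j + k). s1 (j - 1 - k) (j - k).
fin.
Qed.

Definition FA2 (m n k j : int) : rat :=
  invfact (m - j) * invfact (n - j) * invfact (j + k) * invfact (j - k).
Definition GA2 (m n k j : int) : rat :=
  - (invfact (m - j) * invfact (n + 1 - j) * invfact (j - 1 + k) * invfact (j - 1 - k)).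

Lemma A2step (m n k j : int) :
  (n + 1 - k)%:~R * (n + 1 + k)%:~R * FA2 m (n + 1) k j
  - (m + n + 1)%:~R * FA2 m n k j
  = GA2 m n k (j + 1) - GA2 m n k j.
Proof.
rewrite /FA2 /GA2.
s1 (n - j) (n + 1 - j).
s1 (m - (j + 1)) (m - j). s1 (n + 1 - (j + 1)) (n + 1 - j).
s0 (j + 1 - 1 + k) (j + k). s0 (j + 1 - 1 - k) (j - k).
s1 (j - 1 + k) (j + k). s1 (j - 1 - k) (j - k).
fin.
Qed.

Lemma eq_zsum (N : nat) (f g : int -> rat) : (forall k, f k = g k) -> zsum N f = zsum N g.
Proof. by move=> h; rewrite /zsum; apply: eq_bigr => i _; apply: h. Qed.

Lemma zsum_lin2 (N : nat) (a b : rat) (f g : int -> rat) :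
  zsum N (fun k => a * f k - b * g k) = a * zsum N f - b * zsum N g.
Proof. by rewrite /zsum !mulr_sumr -sumrB. Qed.

Lemma natrZ (x : nat) (z : int) : z = Posz x -> (x%:R : rat) = z%:~R.
Proof. by move->. Qed.

Lemma iv0E : invfact 0 = 1.
Proof. by rewrite (iv_nat 0) invr1. Qed.

Lemma cne0 (x : int) : 0 < x -> (x%:~R : rat) != 0.
Proof. by move=> h; rewrite intr_eq0; lia. Qed.

Lemma FK1_00 (u : nat) : FK1 u (Posz 0) 0 = (u`!)%:R^-1 * invfact (Posz 0) * invfact (u%:Z + Posz 0).
Proof.
rewrite /FK1 expr0z !addr0 iv0E !mulr1 mul1r iv_nat. by [].
Qed.

Lemma K1sum (u N j : nat) : (u <= N)%N ->
  zsum N (FK1 u j) = (u`!)%:R^-1 * invfact j * invfact (u%:Z + j%:Z).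
Proof.
move=> huN.
pose S := fun j : nat => zsum N (FK1 u j).
pose T := fun j : nat => (u`!)%:R^-1 * invfact j * invfact (u%:Z + j%:Z).
pose c := fun j : nat => ((j%:Z + 1)%:~R * (u%:Z + j%:Z + 1)%:~R : rat).
apply: (@rec_ind S T c (fun=> 1) 0%N) => //.
- rewrite /S /T zsum_single.
    exact: FK1_00.
  move=> k hk; rewrite /FK1.
  case: (ltP k 0) => hk0.
    by rewrite (iv_neg (0 + k)) ?mulr0 ?mul0r //; lia.
  by rewrite (iv_neg (0 - k)) ?mulr0 ?mul0r //; lia.
- move=> n; rewrite /S /c mul1r.
  have -> : Posz n.+1 = n%:Z + 1 by lia.
  apply/eqP; rewrite -subr_eq0 -zsum_lin.
  rewrite (@eq_zsum N _ _ (K1step u n)) zsum_tele /GK1.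
  rewrite (iv_neg (u%:Z - (N%:Z + 1))); last lia.
  rewrite (iv_neg (u%:Z + - N%:Z - 1)); last lia.
  by rewrite !(mulr0, mul0r) subrr.
- move=> n; rewrite /T /c mul1r.
  have -> : Posz n.+1 = n%:Z + 1 by lia.
  s1 (Posz n) (n%:Z + 1). s1 (u%:Z + n%:Z) (u%:Z + (n%:Z + 1)).
  rewrite !intrD; ring.
- move=> n _; rewrite /c mulf_neq0 // cne0 //; lia.
Qed.

Lemma FK2_00 (u v : nat) : FK2 u v (Posz 0) 0 =
  invfact u * invfact u * invfact v * invfact v.
Proof. by rewrite /FK2 expr0z !addr0 iv0E !mulr1 mul1r. Qed.

Lemma K2sum (u v N j : nat) : (u <= N)%N ->
  zsum N (FK2 u v j) = ((u + v + j)`!)%:R * invfact j * invfact (u%:Z + j%:Z)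
     * invfact (v%:Z + j%:Z) * invfact u * invfact v / ((u + v)`!)%:R.
Proof.
move=> huN.
have hf : forall x, ((x`!)%:R : rat) != 0 by move=> x; rewrite pnatr_eq0 -lt0n fact_gt0.
pose S := fun j : nat => zsum N (FK2 u v j).
pose T := fun j : nat => ((u + v + j)`!)%:R * invfact j * invfact (u%:Z + j%:Z)
     * invfact (v%:Z + j%:Z) * invfact u * invfact v / ((u + v)`!)%:R.
pose c := fun j : nat => ((j%:Z + 1)%:~R * (u%:Z + j%:Z + 1)%:~R * (v%:Z + j%:Z + 1)%:~R : rat).
pose d := fun j : nat => ((u%:Z + v%:Z + j%:Z + 1)%:~R : rat).
apply: (@rec_ind S T c d 0%N) => //.
- rewrite /S /T zsum_single.
    rewrite FK2_00 addn0 iv0E !mulr1.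
    have h1 := hf (u + v)%N.
    have -> : u%:Z + Posz 0 = u%:Z by rewrite addr0.
    have -> : v%:Z + Posz 0 = v%:Z by rewrite addr0.
    by field.
  move=> k hk; rewrite /FK2.
  case: (ltP k 0) => hk0.
    by rewrite (iv_neg (0 + k)) ?mulr0 ?mul0r //; lia.
  by rewrite (iv_neg (0 - k)) ?mulr0 ?mul0r //; lia.
- move=> n; rewrite /S /c /d.
  have -> : Posz n.+1 = n%:Z + 1 by lia.
  apply/eqP; rewrite -subr_eq0 -zsum_lin2.
  rewrite (@eq_zsum N _ _ (K2step u v n)) zsum_tele /GK2.
  rewrite (iv_neg (u%:Z - (N%:Z + 1))); last lia.
  rewrite (iv_neg (u%:Z + - N%:Z - 1)); last lia.
  by rewrite !(mulr0, mul0r) subrr.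
- move=> n; rewrite /T /c /d.
  have -> : Posz n.+1 = n%:Z + 1 by lia.
  rewrite addnS factS natrM (@natrZ (u + v + n).+1 (u%:Z + v%:Z + n%:Z + 1)); last lia.
  s1 (Posz n) (n%:Z + 1). s1 (u%:Z + n%:Z) (u%:Z + (n%:Z + 1)).
  s1 (v%:Z + n%:Z) (v%:Z + (n%:Z + 1)).
  rewrite !intrD; ring.
- move=> n _; rewrite /c !mulf_neq0 // cne0 //; lia.
Qed.

Lemma factne0 (x : nat) : ((x`!)%:R : rat) != 0.
Proof. by rewrite pnatr_eq0 -lt0n fact_gt0. Qed.

Definition SA1 (l m : nat) (k : int) (J n : nat) : rat :=
  \sum_(j < J) FA1 l m n k j ((l + m + n - j)`!)%:R.
Definition TA1 (l m : nat) (k : int) (n : nat) : rat :=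
  binZ (l + m) (l%:Z + k) * binZ (m + n) (m%:Z + k) * binZ (n + l) (n%:Z + k).

Lemma TA1_iv l m k n : TA1 l m k n =
  ((l + m)`!)%:R * invfact (l%:Z + k) * invfact (m%:Z - k) *
  (((m + n)`!)%:R * invfact (m%:Z + k) * invfact (n%:Z - k)) *
  (((n + l)`!)%:R * invfact (n%:Z + k) * invfact (l%:Z - k)).
Proof.
rewrite /TA1 (@binZ_iv (l + m) _ (m%:Z - k)); last lia.
rewrite (@binZ_iv (m + n) _ (n%:Z - k)); last lia.
by rewrite (@binZ_iv (n + l) _ (l%:Z - k)); last lia.
Qed.

Lemma A1point (l m n : nat) (k : int) (j : nat) :
  (n%:Z + 1 - k)%:~R * (n%:Z + 1 + k)%:~R * FA1 l m (n%:Z + 1) k j ((l + m + n.+1 - j)`!)%:R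
  - (m%:Z + n%:Z + 1)%:~R * (n%:Z + l%:Z + 1)%:~R * FA1 l m n k j ((l + m + n - j)`!)%:R
  = GA1 l m n k (j.+1) ((l + m + n.+1 - j.+1)`!)%:R - GA1 l m n k j ((l + m + n.+1 - j)`!)%:R.
Proof.
case: (leqP j l) => hjl.
  have -> : Posz j.+1 = j%:Z + 1 by lia.
  have -> : (l + m + n.+1 - j.+1 = l + m + n - j)%N by lia.
  apply: A1step.
  have -> : (l + m + n.+1 - j = (l + m + n - j).+1)%N by lia.
  by rewrite factS natrM (@natrZ _ (l%:Z + m%:Z + n%:Z + 1 - j%:Z)) //; lia.
rewrite /FA1 /GA1 (iv_neg (l%:Z - j%:Z)); last lia.
rewrite (iv_neg (l%:Z - Posz j.+1)); last lia.
by rewrite !(mulr0, mul0r, oppr0, subrr).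
Qed.

Lemma A1base (l m : nat) (k : int) (J K : nat) : (l < J)%N ->
  (k = Posz K \/ k = - Posz K) -> SA1 l m k J K = TA1 l m k K.
Proof.
move=> hJ hk.
rewrite /SA1 (@sum_single J K (fun j : nat => FA1 l m K k j ((l + m + K - j)`!)%:R)); last first.
- move=> hJK; rewrite /FA1 (iv_neg (l%:Z - K%:Z)) ?(mulr0, mul0r) //; lia.
- move=> j hj; rewrite /FA1.
  case: (ltnP K j) => hKj.
    by rewrite (iv_neg (K%:Z - j%:Z)) ?(mulr0, mul0r) //; lia.
  case: hk => -> .
    by rewrite (iv_neg (j%:Z - K%:Z)) ?(mulr0, mul0r) //; lia.
  by rewrite (iv_neg (j%:Z + - K%:Z)) ?(mulr0, mul0r) //; lia.
rewrite TA1_iv /FA1 addnK.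
case: hk => ->.
- s0 (K%:Z - K%:Z) (0 : int). s0 (l%:Z + K%:Z) (Posz (K + l)). s0 (m%:Z + K%:Z) (Posz (m + K)).
  rewrite iv0E !iv_nat.
  have h1 := factne0 (K + l); have h2 := factne0 (m + K); have h3 := factne0 (K + K).
  by field; rewrite !factne0.
- rewrite subrr. s0 (m%:Z - - K%:Z) (Posz (m + K)). s0 (l%:Z - - K%:Z) (Posz (K + l)).
  rewrite iv0E !iv_nat.
  have h1 := factne0 (K + l); have h2 := factne0 (m + K); have h3 := factne0 (K + K).
  by field; rewrite !factne0.
Qed.

Lemma A1sum (l m : nat) (k : int) (J n : nat) : (l < J)%N -> SA1 l m k J n = TA1 l m k n.
Proof.
move=> hJ; move: n.
pose c := fun n : nat => ((n%:Z + 1 - k)%:~R * (n%:Z + 1 + k)%:~R : rat).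
pose d := fun n : nat => ((m%:Z + n%:Z + 1)%:~R * (n%:Z + l%:Z + 1)%:~R : rat).
apply: (@rec_ind (SA1 l m k J) (TA1 l m k) c d `|k|%N).
- move=> n hn; rewrite TA1_iv /SA1 big1.
    case: (ltP k 0) => hk.
      by rewrite (iv_neg (n%:Z + k)) ?(mulr0, mul0r) //; lia.
    by rewrite (iv_neg (n%:Z - k)) ?(mulr0, mul0r) //; lia.
  move=> j _; rewrite /FA1.
  case: (ltnP n j) => hj.
    by rewrite (iv_neg (n%:Z - j%:Z)) ?(mulr0, mul0r) //; lia.
  case: (ltP k 0) => hk.
    by rewrite (iv_neg (j%:Z + k)) ?(mulr0, mul0r) //; lia.
  by rewrite (iv_neg (j%:Z - k)) ?(mulr0, mul0r) //; lia.
- apply: A1base => //; lia.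
- move=> n; rewrite /SA1 /c /d !mulr_sumr.
  have -> : Posz n.+1 = n%:Z + 1 by lia.
  apply/eqP; rewrite -subr_eq0 -sumrB.
  rewrite (eq_bigr (fun j : 'I_J => GA1 l m n k (j.+1) ((l + m + n.+1 - j.+1)`!)%:R
     - GA1 l m n k j ((l + m + n.+1 - j)`!)%:R)); last first.
    by move=> j _; exact: A1point.
  rewrite (nsum_tele J (fun j => GA1 l m n k j ((l + m + n.+1 - j)`!)%:R)) /GA1.
  rewrite (iv_neg (l%:Z - J%:Z)); last lia.
  case: (ltP k 0) => hk.
    by rewrite (iv_neg (Posz 0 - 1 + k)) ?(mulr0, mul0r, oppr0, subrr) //; lia.
  by rewrite (iv_neg (Posz 0 - 1 - k)) ?(mulr0, mul0r, oppr0, subrr) //; lia.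
- move=> n; rewrite !TA1_iv /c /d.
  have -> : Posz n.+1 = n%:Z + 1 by lia.
  rewrite addnS addSn !factS !natrM (@natrZ (m + n).+1 (m%:Z + n%:Z + 1)); last lia.
  rewrite (@natrZ (n + l).+1 (n%:Z + l%:Z + 1)); last lia.
  s1 (n%:Z - k) (n%:Z + 1 - k). s1 (n%:Z + k) (n%:Z + 1 + k).
  rewrite !intrD !intrN; ring.
- move=> n hn; rewrite /c mulf_neq0 // cne0 //; lia.
Qed.

Definition SA2 (m : nat) (k : int) (J n : nat) : rat :=
  ((m + n)`!)%:R * \sum_(j < J) FA2 m n k j.
Definition TA2 (m : nat) (k : int) (n : nat) : rat :=
  binZ (m + n) (m%:Z + k) * binZ (m + n) (n%:Z + k).

Lemma TA2_iv m k n : TA2 m k n =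
  ((m + n)`!)%:R * invfact (m%:Z + k) * invfact (n%:Z - k) *
  (((m + n)`!)%:R * invfact (n%:Z + k) * invfact (m%:Z - k)).
Proof.
rewrite /TA2 (@binZ_iv (m + n) _ (n%:Z - k)); last lia.
by rewrite (@binZ_iv (m + n) _ (m%:Z - k)); last lia.
Qed.

Lemma A2point (m n : nat) (k : int) (j : nat) :
  (n%:Z + 1 - k)%:~R * (n%:Z + 1 + k)%:~R * FA2 m (n%:Z + 1) k j
  - (m%:Z + n%:Z + 1)%:~R * FA2 m n k j
  = GA2 m n k j.+1 - GA2 m n k j.
Proof. have -> : Posz j.+1 = j%:Z + 1 by lia. exact: A2step. Qed.

Lemma A2base (m : nat) (k : int) (J K : nat) : (m < J)%N ->
  (k = Posz K \/ k = - Posz K) -> SA2 m k J K = TA2 m k K.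
Proof.
move=> hJ hk.
rewrite /SA2 (@sum_single J K (fun j : nat => FA2 m K k j)); last first.
- move=> hJK; rewrite /FA2 (iv_neg (m%:Z - K%:Z)) ?(mulr0, mul0r) //; lia.
- move=> j hj; rewrite /FA2.
  case: (ltnP K j) => hKj.
    by rewrite (iv_neg (K%:Z - j%:Z)) ?(mulr0, mul0r) //; lia.
  case: hk => -> .
    by rewrite (iv_neg (j%:Z - K%:Z)) ?(mulr0, mul0r) //; lia.
  by rewrite (iv_neg (j%:Z + - K%:Z)) ?(mulr0, mul0r) //; lia.
rewrite TA2_iv /FA2.
case: hk => ->.
- rewrite subrr. s0 (m%:Z + K%:Z) (Posz (m + K)).
  rewrite iv0E !iv_nat.
  by field; rewrite !factne0.
- rewrite subrr. s0 (m%:Z - - K%:Z) (Posz (m + K)).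
  rewrite iv0E !iv_nat.
  by field; rewrite !factne0.
Qed.

Lemma A2sum (m : nat) (k : int) (J n : nat) : (m < J)%N -> SA2 m k J n = TA2 m k n.
Proof.
move=> hJ; move: n.
pose c := fun n : nat => ((n%:Z + 1 - k)%:~R * (n%:Z + 1 + k)%:~R : rat).
pose d := fun n : nat => ((m%:Z + n%:Z + 1)%:~R * (m%:Z + n%:Z + 1)%:~R : rat).
apply: (@rec_ind (SA2 m k J) (TA2 m k) c d `|k|%N).
- move=> n hn; rewrite TA2_iv /SA2 big1 ?mulr0.
    case: (ltP k 0) => hk.
      by rewrite (iv_neg (n%:Z + k)) ?(mulr0, mul0r) //; lia.
    by rewrite (iv_neg (n%:Z - k)) ?(mulr0, mul0r) //; lia.
  move=> j _; rewrite /FA2.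
  case: (ltnP n j) => hj.
    by rewrite (iv_neg (n%:Z - j%:Z)) ?(mulr0, mul0r) //; lia.
  case: (ltP k 0) => hk.
    by rewrite (iv_neg (j%:Z + k)) ?(mulr0, mul0r) //; lia.
  by rewrite (iv_neg (j%:Z - k)) ?(mulr0, mul0r) //; lia.
- apply: A2base => //; lia.
- move=> n; rewrite /SA2 /c /d.
  have -> : Posz n.+1 = n%:Z + 1 by lia.
  have h : (n%:Z + 1 - k)%:~R * (n%:Z + 1 + k)%:~R * \sum_(j < J) FA2 m (n%:Z + 1) k j
         = (m%:Z + n%:Z + 1)%:~R * \sum_(j < J) FA2 m n k j.
    apply/eqP; rewrite -subr_eq0 !mulr_sumr -sumrB.
    rewrite (eq_bigr (fun j : 'I_J => GA2 m n k (j.+1) - GA2 m n k j)); last first.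
      by move=> j _; exact: A2point.
    rewrite (nsum_tele J (fun j => GA2 m n k j)) /GA2.
    rewrite (iv_neg (m%:Z - J%:Z)); last lia.
    case: (ltP k 0) => hk.
      by rewrite (iv_neg (Posz 0 - 1 + k)) ?(mulr0, mul0r, oppr0, subrr) //; lia.
    by rewrite (iv_neg (Posz 0 - 1 - k)) ?(mulr0, mul0r, oppr0, subrr) //; lia.
  rewrite addnS factS natrM (@natrZ (m + n).+1 (m%:Z + n%:Z + 1)); last lia.
  move: h; move: (\sum_(j < J) FA2 m (n%:Z + 1) k j) (\sum_(j < J) FA2 m n k j) => S1 S0 h.
  transitivity ((m%:Z + n%:Z + 1)%:~R * (m + n)`!%:R *
     ((n%:Z + 1 - k)%:~R * (n%:Z + 1 + k)%:~R * S1)); first by ring.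
  rewrite h; ring.
- move=> n; rewrite !TA2_iv /c /d.
  have -> : Posz n.+1 = n%:Z + 1 by lia.
  rewrite addnS !factS !natrM (@natrZ (m + n).+1 (m%:Z + n%:Z + 1)); last lia.
  s1 (n%:Z - k) (n%:Z + 1 - k). s1 (n%:Z + k) (n%:Z + 1 + k).
  rewrite !intrD !intrN; ring.
- move=> n hn; rewrite /c mulf_neq0 // cne0 //; lia.
Qed.


Lemma zsum_exch (N J : nat) (c : nat -> rat) (F : nat -> int -> rat) :
  zsum N (fun k => \sum_(j < J) c j * F j k) = \sum_(j < J) c j * zsum N (F j).
Proof.
rewrite /zsum exchange_big /=; apply: eq_bigr => j _; by rewrite mulr_sumr.
Qed.

Lemma zsum_scale (N : nat) (a : rat) (f : int -> rat) :
  zsum N (fun k => a * f k) = a * zsum N f.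
Proof. by rewrite /zsum mulr_sumr. Qed.

Lemma part1 (l m n u : nat) :
  zsum (l + m + n + u)
    (fun k : int => (-1 : rat) ^ k
       * binZ (l + m)%N (l%:Z + k) * binZ (m + n)%N (m%:Z + k)
       * binZ (n + l)%N (n%:Z + k) * binZ (2 * u)%N (u%:Z + k))
  = ((2 * u)`!)%:R / (u`!)%:R *
    \sum_(k < (l + m + n).+1)
      ((l + m + n - k)`!)%:R * invfact k * invfact (l%:Z - k%:Z)
        * invfact (m%:Z - k%:Z) * invfact (n%:Z - k%:Z) * invfact (u%:Z + k%:Z).
Proof.
set J := (l + m + n).+1.
have hJ : (l < J)%N by rewrite /J; lia.
pose c := fun j : nat => ((l + m + n - j)`!)%:R * invfact (l%:Z - j%:Z)
   * invfact (m%:Z - j%:Z) * invfact (n%:Z - j%:Z).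
rewrite (@eq_zsum _ _ (fun k => ((2 * u)`!)%:R * \sum_(j < J) c j * FK1 u j k)); last first.
  move=> k.
  have -> : forall (s b1 b2 b3 b4 : rat), s * b1 * b2 * b3 * b4 = s * (b1 * b2 * b3) * b4
    by move=> *; ring.
  rewrite -/(TA1 l m k n) -(@A1sum l m k J n hJ) /SA1.
  rewrite (@binZ_iv (2 * u) _ (u%:Z - k)); last lia.
  rewrite mulr_sumr mulr_suml mulr_sumr; apply: eq_bigr => j _.
  rewrite /FA1 /FK1 /c.
  move: ((-1 : rat) ^ k) => sg; ring.
rewrite zsum_scale (@zsum_exch _ J c (fun j : nat => FK1 u j)).
rewrite (eq_bigr (fun j : 'I_J => c j * ((u`!)%:R^-1 * invfact j * invfact (u%:Z + j%:Z)))); last first.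
  by move=> j _; rewrite K1sum //; lia.
rewrite !mulr_sumr; apply: eq_bigr => j _; rewrite /c; ring.
Qed.

Lemma binCE (u v : nat) : ('C(u + v, u))%:R = ((u + v)`!)%:R * invfact u * invfact v :> rat.
Proof.
have h := @bin_fact (u + v) u (leq_addr v u).
rewrite addKn in h.
rewrite -h !natrM !iv_nat.
by field; rewrite !factne0.
Qed.

Lemma part2 (m n u v : nat) :
  zsum (m + n + u + v)
    (fun k : int => (-1 : rat) ^ k
       * binZ (m + n)%N (m%:Z + k) * binZ (m + n)%N (n%:Z + k)
       * binZ (u + v)%N (u%:Z + k) * binZ (u + v)%N (v%:Z + k))
  = ('C(u + v, u))%:R *
    \sum_(k < (m + n).+1)
      ((m + n)`!)%:R * ((u + v + k)`!)%:R * invfact k * invfact (m%:Z - k%:Z)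
        * invfact (n%:Z - k%:Z) * invfact (u%:Z + k%:Z) * invfact (v%:Z + k%:Z).
Proof.
set J := (m + n).+1.
have hJ : (m < J)%N by rewrite /J; lia.
pose c := fun j : nat => invfact (m%:Z - j%:Z) * invfact (n%:Z - j%:Z).
rewrite (@eq_zsum _ _ (fun k => ((m + n)`!)%:R * ((u + v)`!)%:R * ((u + v)`!)%:R
    * \sum_(j < J) c j * FK2 u v j k)); last first.
  move=> k.
  have -> : forall (s b1 b2 b3 b4 : rat), s * b1 * b2 * b3 * b4 = s * (b1 * b2) * b3 * b4
    by move=> *; ring.
  rewrite -/(TA2 m k n) -(@A2sum m k J n hJ) /SA2.
  rewrite (@binZ_iv (u + v) (u%:Z + k) (v%:Z - k)); last lia.
  rewrite (@binZ_iv (u + v) (v%:Z + k) (u%:Z - k)); last lia.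
  rewrite ?mulr_sumr ?mulr_suml ?mulr_sumr ?mulr_suml; apply: eq_bigr => j _.
  rewrite /FA2 /FK2 /c.
  move: ((-1 : rat) ^ k) => sg; ring.
rewrite zsum_scale (@zsum_exch _ J c (fun j : nat => FK2 u v j)).
rewrite (eq_bigr (fun j : 'I_J => c j * (((u + v + j)`!)%:R * invfact j * invfact (u%:Z + j%:Z)
     * invfact (v%:Z + j%:Z) * invfact u * invfact v / ((u + v)`!)%:R))); last first.
  by move=> j _; rewrite K2sum //; lia.
rewrite binCE !mulr_sumr; apply: eq_bigr => j _; rewrite /c.
by field; rewrite !factne0.
Qed.
Theorem corollary5p9 (l m n u v : nat) :
  zsum (l + m + n + u)
    (fun k : int => (-1 : rat) ^ k
       * binZ (l + m)%N (l%:Z + k) * binZ (m + n)%N (m%:Z + k)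
       * binZ (n + l)%N (n%:Z + k) * binZ (2 * u)%N (u%:Z + k))
  = ((2 * u)`!)%:R / (u`!)%:R *
    \sum_(k < (l + m + n).+1)
      ((l + m + n - k)`!)%:R * invfact k * invfact (l%:Z - k%:Z)
        * invfact (m%:Z - k%:Z) * invfact (n%:Z - k%:Z) * invfact (u%:Z + k%:Z)
  /\
  zsum (m + n + u + v)
    (fun k : int => (-1 : rat) ^ k
       * binZ (m + n)%N (m%:Z + k) * binZ (m + n)%N (n%:Z + k)
       * binZ (u + v)%N (u%:Z + k) * binZ (u + v)%N (v%:Z + k))
  = ('C(u + v, u))%:R *
    \sum_(k < (m + n).+1)
      ((m + n)`!)%:R * ((u + v + k)`!)%:R * invfact k * invfact (m%:Z - k%:Z)
        * invfact (n%:Z - k%:Z) * invfact (u%:Z + k%:Z) * invfact (v%:Z + k%:Z).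
Proof. split; [exact: part1 | exact: part2]. Qed.
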